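(* Let $(G,f)$ be a tensor network where $G=(\mathcal V,\mathcal E)$ admits an $(s,t)$-bipolar orientation for some vertices $s,t\in\mathcal V$. Then \[|\mathrm{val}(G,f)|\le\|f(s)\|_F\,\|f(t)\|_F\prod_{v\in\mathcal V\setminus\{s,t\}}\|f(v)\|_{\mathrm{mat}\text{-}\mathrm{op}}\prod_{e\in\mathcal E}\|f(e)\|_{\mathrm{op}}.\]
   Context: Tensor network: a pair $(G,f)$ where $G=(\mathcal V,\mathcal E)$ is a finite multigraph without self-loops, each vertex $v$ has an ordered list $\partial v$ of its incident edges ($\deg(v)=|\partial v|$, counting multiplicity), each edge $e=(u,v)$ has an ordering of its endpoints; $f(v)\in(\mathbb R^n)^{\otimes\deg(v)}$ for $v\in\mathcal V$ and $f(e)\in\mathbb R^{n\times n}$ for $e\in\mathcal E$. Its value is $\mathrm{val}(G,f)=\sum_{(i_{v,e})}\prod_{v\in\mathcal V}f(v)[i_{v,e}:e\in\partial v]\prod_{e=(u,v)\in\mathcal E}f(e)[i_{u,e},i_{v,e}]$, summing over one index $i_{v,e}\in[n]$ for each incident vertex–edge pair. Bipolar orientation: $G$ admits an $(s,t)$-bipolar orientation if its edges can be directed so that there are no directed cycles, $s$ is the unique source (no incoming edges) and $t$ the unique sink (no outgoing edges). Norms: for a tensor $T\in(\mathbb R^n)^{\otimes k}$, $\|T\|_F$ is the Euclidean norm of its vectorization; for a partition $[k]=I\sqcup J$, $\|T\|_{I\to J}$ is the operator norm of the matricization of $T$ with row indices $I$ and column indices $J$; $\|T\|_{\mathrm{mat}\text{-}\mathrm{op}}=\max\{\|T\|_{I\to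 J}: I\sqcup J=[k],\ |I|\ge1,\ |J|\ge1\}$. $\|\cdot\|_{\mathrm{op}}$ is the matrix operator norm. *)

(* Defs.v *)
From HB Require Import structures.
From mathcomp Require Import all_boot all_order all_algebra.
From mathcomp Require Import boolp classical_sets reals.
Set Implicit Arguments.
Unset Strict Implicit.
Unset Printing Implicit Defensive.
Import Order.TTheory GRing.Theory Num.Theory.
Local Open Scope ring_scope.
Local Open Scope classical_set_scope.

(* Vertices V, edges E (finite types).  Each edge e has an ordered pair of
   endpoints (esrc e, edst e).  Each vertex v has an ordered list of incident
   edges, given as port v : 'I_(deg v) -> E. *)
Record multigraph (V E : finType) := Multigraph {
  esrc : E -> V;
  edst : E -> V;
  deg  : V -> nat;
  port : forall v : V, 'I_(deg v) -> E
}.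
Arguments esrc {V E} _ _.
Arguments edst {V E} _ _.
Arguments deg {V E} _ _.
Arguments port {V E} _ _ _.

Definition wf_multigraph (V E : finType) (g : multigraph V E) : Prop :=
  [/\ forall e, esrc g e != edst g e,
      forall v, injective (port g v)
    & forall v e, (exists k, port g v k = e) <-> (esrc g e = v \/ edst g e = v)].

Definition otail (V E : finType) (g : multigraph V E) (dir : E -> bool) (e : E) : V :=
  if dir e then esrc g e else edst g e.
Definition ohead (V E : finType) (g : multigraph V E) (dir : E -> bool) (e : E) : V :=
  if dir e then edst g e else esrc g e.

Definition oarc (V E : finType) (g : multigraph V E) (dir : E -> bool) : rel V :=
  fun u w => [exists e, (otail g dir e == u) && (ohead g dir e == w)].

Definition oacyclic (V E : finType) (g : multigraph V E) (dir : E -> bool) : Prop :=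
  forall u w, oarc g dir u w -> ~~ connect (oarc g dir) w u.

Definition is_source (V E : finType) (g : multigraph V E) (dir : E -> bool) (v : V) : Prop :=
  forall e, ohead g dir e != v.
Definition is_sink (V E : finType) (g : multigraph V E) (dir : E -> bool) (v : V) : Prop :=
  forall e, otail g dir e != v.

Definition bipolar (V E : finType) (g : multigraph V E) (s t : V) : Prop :=
  s != t /\
  exists dir : E -> bool,
    [/\ oacyclic g dir,
        is_source g dir s, (forall v, is_source g dir v -> v = s),
        is_sink g dir t & (forall v, is_sink g dir v -> v = t)].

(* A tensor in (R^n)^{\otimes k}: a real function of a multi-index. *)
Definition tensor (R : realType) (n k : nat) := {ffun 'I_k -> 'I_n} -> R.

Definition l2 (R : realType) (T : finType) (x : T -> R) : R :=
  Num.sqrt (\sum_(i : T) x i ^+ 2).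

Definition opnorm2 (R : realType) (RT CT : finType) (M : RT -> CT -> R) : R :=
  sup [set y : R | exists b : CT -> R,
          l2 b <= 1 /\ y = l2 (fun r : RT => \sum_(c : CT) M r c * b c)].

Definition mxopnorm (R : realType) (n : nat) (A : 'M[R]_n) : R :=
  opnorm2 (fun i j : 'I_n => A i j).

Definition frob (R : realType) (n k : nat) (T : tensor R n k) : R := l2 T.

Definition merge (n k : nat) (I : {set 'I_k})
    (a : {ffun {j : 'I_k | j \in I} -> 'I_n})
    (b : {ffun {j : 'I_k | j \notin I} -> 'I_n}) : {ffun 'I_k -> 'I_n} :=
  [ffun j => match boolP (j \in I) with
             | AltTrue H => a (exist _ j H)
             | AltFalse H => b (exist _ j H)
             end].

(* || T ||_{I -> J} with J = complement of I: operator norm of the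
   matricization with row indices I and column indices J *)
Definition matnorm (R : realType) (n k : nat) (T : tensor R n k) (I : {set 'I_k}) : R :=
  opnorm2 (fun (a : {ffun {j : 'I_k | j \in I} -> 'I_n})
               (b : {ffun {j : 'I_k | j \notin I} -> 'I_n}) => T (merge a b)).

(* || T ||_{mat-op}: maximum over partitions with both parts nonempty
   (all matnorms are >= 0, so 0 is a neutral default) *)
Definition matopnorm (R : realType) (n k : nat) (T : tensor R n k) : R :=
  \big[Num.max/0]_(I : {set 'I_k} | (0 < #|I|)%N && (#|I| < k)%N) matnorm T I.

(* The indices i_{v,e} for incident pairs are encoded as i (e, false) for
   v = esrc e and i (e, true) for v = edst e. *)
Definition tn_val (R : realType) (n : nat) (V E : finType) (g : multigraph V E)
    (fv : forall v : V, tensor R n (deg g v)) (fe : E -> 'M[R]_n) : R :=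
  \sum_(i : {ffun E * bool -> 'I_n})
     (\prod_(v : V) fv v [ffun k => i (port g v k, edst g (port g v k) == v)])
   * (\prod_(e : E) fe e (i (e, false)) (i (e, true))).

(* Main.v *)
Require Import Defs.
From HB Require Import structures.
From mathcomp Require Import all_boot all_order all_algebra.
From mathcomp Require Import boolp classical_sets reals.
From mathcomp Require Import ring lra zify.
Import fintype finset bigop.
Import Order.TTheory GRing.Theory Num.Theory.
Local Open Scope ring_scope.
Set Implicit Arguments.
Unset Strict Implicit.
Unset Printing Implicit Defensive.

Section Gen.
Variables (R : realType) (K : finType) (n : nat).
Local Notation X := {ffun K -> 'I_n}.

Definition agree (S : {set K}) (i j : X) : bool :=
  [forall k, (k \in S) ==> (i k == j k)].

Lemma agreeP (S : {set K}) (i j : X) : reflect (forall k, k \in S -> i k = j k) (agree S i j).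
Proof.
apply: (iffP forallP) => [H k kS | H k]; first by have /implyP/(_ kS)/eqP := H k.
by apply/implyP => kS; rewrite H.
Qed.

Definition dep (S : {set K}) (f : X -> R) := forall i j, agree S i j -> f i = f j.

Definition sumS (S : {set K}) (f : X -> R) (i : X) : R :=
  \sum_(j | agree (~: S) j i) f j.

Definition nrm S (f : X -> R) i := Num.sqrt (sumS S (fun j => f j ^+ 2) i).

Definition upd (S : {set K}) (x j : X) : X :=
  [ffun k => if k \in S then x k else j k].

Definition chart (S : {set K}) (A : finType) (h : A -> X -> X) :=
  [/\ forall a i, agree (~: S) (h a i) i,
      forall a i i', agree S (h a i) (h a i')
    & exists g : X -> A, (forall a i, g (h a i) = a) /\
         (forall i y, agree (~: S) y i -> h (g y) i = y)].

Lemma chart_sum S (A : finType) (h : A -> X -> X) f i : chart S h -> sumS S f i = \sum_(a : A) f (h a i).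
Proof.
case=> h1 _ [g [gh hg]].
rewrite /sumS (reindex (fun a => h a i)) /=; last first.
  by exists g => [a _ | y]; [exact: gh | rewrite inE => /hg; apply].
by apply: eq_bigl => a; rewrite h1.
Qed.

Definition ext (J : finType) (sg : J -> K) (a : {ffun J -> 'I_n}) (i : X) : X :=
  [ffun k => if [pick j | sg j == k] is Some j then a j else i k].

Lemma ext_in (J : finType) (sg : J -> K) a i j : injective sg -> ext sg a i (sg j) = a j.
Proof.
move=> inj; rewrite /ext ffunE; case: pickP => [j' /eqP/inj -> // | /(_ j)].
by rewrite eqxx.
Qed.

Lemma ext_out (J : finType) (sg : J -> K) a i k : (forall j, sg j != k) -> ext sg a i k = i k.
Proof.
move=> H; rewrite ffunE; case: pickP => [j' /eqP E|//].
by move: (H j'); rewrite E eqxx.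
Qed.

Lemma chart_ext (J : finType) (sg : J -> K) (S : {set K}) : injective sg ->
  (forall k, (k \in S) = [exists j, sg j == k]) -> chart S (@ext J sg).
Proof.
move=> inj HS; split.
- move=> a i; apply/agreeP => k; rewrite inE HS => /existsPn H.
  by rewrite ext_out.
- move=> a i i'; apply/agreeP => k; rewrite HS => /existsP [j /eqP <-].
  by rewrite !ext_in.
- exists (fun y => [ffun j => y (sg j)]); split.
    by move=> a i; apply/ffunP => j; rewrite ffunE ext_in.
  move=> i y /agreeP Hy; apply/ffunP => k.
  case: (boolP [exists j, sg j == k]) => [/existsP [j /eqP <-]|/existsPn H].
    by rewrite ext_in // ffunE.
  by rewrite ext_out // Hy // inE HS; apply/existsPn.
Qed.

Lemma chart_sig (S : {set K}) : chart S (@ext {k : K | k \in S} val).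
Proof.
apply: chart_ext; first exact: val_inj.
move=> k; apply/idP/existsP => [kS|[j /eqP <-]]; last exact: valP.
by exists (exist _ k kS).
Qed.

Definition upd1 (k0 : K) (a : 'I_n) (i : X) : X :=
  [ffun k => if k == k0 then a else i k].

Lemma chart_upd1 k0 : chart [set k0] (upd1 k0).
Proof.
split.
- move=> a i; apply/agreeP => k; rewrite !inE ffunE => /negbTE ->//.
- by move=> a i i'; apply/agreeP => k; rewrite !inE !ffunE => ->.
- exists (fun y => y k0); split; first by move=> a i; rewrite ffunE eqxx.
  move=> i y /agreeP Hy; apply/ffunP => k; rewrite ffunE.
  case: eqP => [->//|/eqP kk]; by rewrite Hy // !inE.
Qed.

Lemma sumS_setT f i : sumS [set: K] f i = \sum_j f j.
Proof. by apply: eq_bigl => j; apply/agreeP => k; rewrite !inE. Qed.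

Lemma agree_setT i j : agree [set: K] i j = (i == j).
Proof.
apply/agreeP/eqP => [H|->//]; by apply/ffunP => k; rewrite H ?inE.
Qed.

Lemma sumS_set0 f i : sumS (finset.set0 : {set K}) f i = f i.
Proof. by rewrite /sumS (big_pred1 i) // => j; rewrite finset.setC0 agree_setT. Qed.

Lemma sumS_ge0 S f i : (forall j, 0 <= f j) -> 0 <= sumS S f i.
Proof. by move=> H; apply: sumr_ge0. Qed.

Lemma sumS_ge S f i : (forall j, 0 <= f j) -> f i <= sumS S f i.
Proof.
move=> H; rewrite /sumS (bigD1 i) /=; last by apply/agreeP.
by rewrite lerDl; apply: sumr_ge0.
Qed.

Lemma nrm_ge0 S f i : 0 <= nrm S f i.
Proof. exact: sqrtr_ge0. Qed.

Lemma nrm_ge S f i : `|f i| <= nrm S f i.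
Proof.
rewrite -sqrtr_sqr /nrm ler_wsqrtr //; apply: sumS_ge.
by move=> j; apply: sqr_ge0.
Qed.

Lemma dep_sub (D D' : {set K}) f : D \subset D' -> dep D f -> dep D' f.
Proof.
move=> /subsetP sub H i j /agreeP A; apply: H; apply/agreeP => k kD.
exact/A/sub.
Qed.

Lemma dep_cst D c : dep D (fun _ => c).
Proof. by []. Qed.

Lemma dep_mul (D1 D2 : {set K}) f1 f2 : dep D1 f1 -> dep D2 f2 ->
  dep (D1 :|: D2) (fun x => f1 x * f2 x).
Proof.
move=> H1 H2 i j /agreeP A; rewrite (H1 i j) ?(H2 i j) //;
  apply/agreeP => k kD; apply: A; by rewrite inE kD ?orbT.
Qed.

Lemma dep_prod (J : finType) (A : {set J}) (D : J -> {set K}) (F : J -> X -> R) :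
  (forall j, dep (D j) (F j)) ->
  dep (\bigcup_(j in A) D j) (fun x => \prod_(j in A) F j x).
Proof.
move=> H i i' Ag; apply: eq_bigr => j jA; apply: H.
move/agreeP: Ag => Ag; apply/agreeP => k kD; apply: Ag.
by apply/bigcupP; exists j.
Qed.

Lemma sumS_dep (D S : {set K}) f : dep D f -> dep (D :\: S) (sumS S f).
Proof.
move=> H i i' /agreeP Ag; rewrite !(chart_sum _ _ (chart_sig S)).
case: (chart_sig S) => c1 c2 _.
apply: eq_bigr => a _; apply: H; apply/agreeP => k kD.
case: (boolP (k \in S)) => kS.
  by have /agreeP := c2 a i i'; apply.
have /agreeP E1 := c1 a i.
have /agreeP E2 := c1 a i'.
by rewrite E1 ?E2 ?inE // Ag // inE kD kS.
Qed.

Lemma sumS_pull (D S : {set K}) g f i : dep D g -> [disjoint D & S] ->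
  sumS S (fun j => g j * f j) i = g i * sumS S f i.
Proof.
move=> H dis; rewrite /sumS mulr_sumr; apply: eq_bigr => j /agreeP Aj.
congr (_ * _); apply: H; apply/agreeP => k kD; apply: Aj.
rewrite inE; apply: contraTN kD => kS.
by rewrite (disjointFl dis kS).
Qed.

Lemma sumS_fubini (A B : {set K}) f i : [disjoint A & B] ->
  sumS (A :|: B) f i = sumS A (sumS B f) i.
Proof.
move=> dis; rewrite /sumS.
rewrite (partition_big (fun y => upd A y i) (fun j => agree (~: A) j i)); last first.
  by move=> y _; apply/agreeP => k; rewrite inE ffunE => /negbTE ->.
apply: eq_bigr => j /agreeP Hj; apply: eq_bigl => y.
apply/idP/idP.
- case/andP => /agreeP Hy /eqP <-; apply/agreeP => k; rewrite inE ffunE => kB.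
  case: ifP => // kA; rewrite Hy // !inE kA.
  by rewrite kB.
- move/agreeP => Hy; apply/andP; split.
    apply/agreeP => k; rewrite !inE negb_or => /andP [kA kB].
    by rewrite Hy ?inE // Hj ?inE.
  apply/eqP/ffunP => k; rewrite ffunE; case: ifP => kA.
    by rewrite Hy // inE (disjointFr dis kA).
  by rewrite Hj // inE kA.
Qed.



Lemma CS (T : finType) (P : pred T) (a b : T -> R) :
  (\sum_(j | P j) a j * b j) ^+ 2 <=
  (\sum_(j | P j) a j ^+ 2) * (\sum_(j | P j) b j ^+ 2).
Proof.
set A := \sum_(j | P j) a j ^+ 2; set B := \sum_(j | P j) b j ^+ 2.
set C := \sum_(j | P j) a j * b j.
have H0 : 0 <= \sum_(i | P i) \sum_(j | P j) (a i * b j - a j * b i) ^+ 2.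
  by apply: sumr_ge0 => i _; apply: sumr_ge0 => j _; apply: sqr_ge0.
have E : \sum_(i | P i) \sum_(j | P j) (a i * b j - a j * b i) ^+ 2 =
   A * B + B * A - 2 * (C * C).
  rewrite /A /B /C !big_distrlr /= mulr_sumr -big_split -sumrB /=.
  apply: eq_bigr => i _; rewrite mulr_sumr -big_split -sumrB /=.
  by apply: eq_bigr => j _; ring.
rewrite E in H0; rewrite expr2; nra.
Qed.

Lemma CSabs (T : finType) (P : pred T) (a b : T -> R) :
  `|\sum_(j | P j) a j * b j| <=
  Num.sqrt (\sum_(j | P j) a j ^+ 2) * Num.sqrt (\sum_(j | P j) b j ^+ 2).
Proof.
rewrite -sqrtr_sqr -sqrtrM; last by apply: sumr_ge0 => j _; apply: sqr_ge0.
exact/ler_wsqrtr/CS.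
Qed.

Definition bnd (kap : X -> R) (S1 S2 : {set K}) (c : R) :=
  forall psi chi, dep S1 psi -> dep S2 chi -> forall i,
   `|sumS (S1 :|: S2) (fun j => psi j * kap j * chi j) i| <=
      c * nrm S1 psi i * nrm S2 chi i.

Lemma bnd_sym kap S1 S2 c : bnd kap S1 S2 c -> bnd kap S2 S1 c.
Proof.
move=> H psi chi d1 d2 i; rewrite finset.setUC.
have -> : sumS (S1 :|: S2) (fun j => psi j * kap j * chi j) i =
          sumS (S1 :|: S2) (fun j => chi j * kap j * psi j) i.
  by apply: eq_bigr => j _; ring.
by apply: le_trans (H chi psi d2 d1 i) _; rewrite -!mulrA [nrm S1 _ _ * _]mulrC.
Qed.

Lemma bnd_mono kap S1 S2 c c' : c <= c' -> bnd kap S1 S2 c -> bnd kap S1 S2 c'.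
Proof.
move=> cc H psi chi d1 d2 i; apply: le_trans (H psi chi d1 d2 i) _.
by rewrite ler_wpM2r ?nrm_ge0 // ler_wpM2r ?nrm_ge0.
Qed.



Lemma step (D S1 S2 : {set K}) phi kap c :
  [disjoint S1 & S2] -> S1 \subset D -> [disjoint S2 & D] ->
  dep D phi -> bnd kap S1 S2 c -> 0 <= c ->
  forall i, nrm ((D :\: S1) :|: S2) (sumS S1 (fun x => phi x * kap x)) i
            <= c * nrm D phi i.
Proof.
move=> d12 sub d2D dphi hb c0 i.
pose Psi := sumS S1 (fun x => phi x * kap x).
have key : forall j, sumS S2 (fun z => Psi z ^+ 2) j <=
                     c ^+ 2 * sumS S1 (fun y => phi y ^+ 2) j.
  move=> j.
  pose psi x := phi (upd S1 x j).
  pose chi x := Psi (upd S2 x j).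
  have dpsi : dep S1 psi.
    move=> x x' /agreeP A; rewrite /psi; congr phi; apply/ffunP => k.
    by rewrite !ffunE; case: ifP => // kS; exact: A.
  have dchi : dep S2 chi.
    move=> x x' /agreeP A; rewrite /chi; congr Psi; apply/ffunP => k.
    by rewrite !ffunE; case: ifP => // kS; exact: A.
  have E1 : sumS (S1 :|: S2) (fun y => psi y * kap y * chi y) j =
            sumS S2 (fun z => Psi z ^+ 2) j.
    rewrite finset.setUC sumS_fubini; last by rewrite disjoint_sym.
    apply: eq_bigr => z /agreeP Hz.
    have -> : Psi z ^+ 2 = sumS S1 (fun y => phi y * kap y * Psi z) z.
      by rewrite expr2 {1}/Psi /sumS mulr_suml.
    apply: eq_bigr => y /agreeP Hy.
    have -> : chi y = Psi z.
      rewrite /chi; congr Psi; apply/ffunP => k; rewrite ffunE; case: ifP => kS2.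
        by apply: Hy; rewrite inE (disjointFl d12 kS2).
      by rewrite Hz // inE kS2.
    have -> // : psi y = phi y.
    apply: dphi; apply/agreeP => k kD; rewrite ffunE; case: ifP => // kS1.
    by rewrite Hy ?inE ?kS1 // Hz // inE (disjointFl d2D kD).
  have E2 : nrm S2 chi j = Num.sqrt (sumS S2 (fun z => Psi z ^+ 2) j).
    congr Num.sqrt; apply: eq_bigr => z /agreeP Hz; congr (_ ^+ 2).
    rewrite /chi; congr Psi; apply/ffunP => k; rewrite ffunE; case: ifP => // kS.
    by rewrite Hz // inE kS.
  have E3 : nrm S1 psi j = Num.sqrt (sumS S1 (fun y => phi y ^+ 2) j).
    congr Num.sqrt; apply: eq_bigr => z /agreeP Hz; congr (_ ^+ 2).
    rewrite /psi; congr phi; apply/ffunP => k; rewrite ffunE; case: ifP => // kS.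
    by rewrite Hz // inE kS.
  have := hb psi chi dpsi dchi j; rewrite E1 E2 E3.
  have a0 : 0 <= sumS S2 (fun z => Psi z ^+ 2) j.
    by apply: sumS_ge0 => z; apply: sqr_ge0.
  have b0 : 0 <= sumS S1 (fun y => phi y ^+ 2) j.
    by apply: sumS_ge0 => z; apply: sqr_ge0.
  move: a0 b0; set a := sumS S2 _ j; set b := sumS S1 _ j => a0 b0.
  rewrite ger0_norm // -{1}(sqr_sqrtr a0) -{2}(sqr_sqrtr b0) => H.
  have sa := sqrtr_ge0 a; have sb := sqrtr_ge0 b.
  rewrite -{1}(sqr_sqrtr a0); move: H; set x := Num.sqrt a; set y := Num.sqrt b.
  move=> H; nra.
rewrite /nrm.
have eD : D = (D :\: S1) :|: S1.
  apply/setP => k; rewrite !inE; case: (boolP (k \in S1)) => kS /=.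
    by rewrite (subsetP sub _ kS) ?orbT ?andbT ?andbF.
  by rewrite orbF.
rewrite [in Z in _ <= _ * Z]eD !sumS_fubini.
2,3: apply/pred0P => k /=; rewrite !inE; apply/negbTE/negP => /andP [/andP [kS kD] kT];
  first [by rewrite kT in kS | by rewrite (disjointFl d2D kD) in kT].
rewrite -[c]ger0_norm // -sqrtr_sqr -sqrtrM ?sqr_ge0 // ler_wsqrtr //.
rewrite /sumS mulr_sumr; apply: ler_sum => j _; exact: key.
Qed.



Lemma l2_ge0 (T : finType) (x : T -> R) : 0 <= l2 x.
Proof. exact: sqrtr_ge0. Qed.

Lemma l2_scale (T : finType) (k : R) (x : T -> R) :
  l2 (fun t => k * x t) = `|k| * l2 x.
Proof.
rewrite /l2 -sqrtr_sqr -sqrtrM ?sqr_ge0 // mulr_sumr; congr Num.sqrt.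
by apply: eq_bigr => t _; rewrite exprMn.
Qed.

Lemma l2_frob (RT CT : finType) (M : RT -> CT -> R) b :
  l2 (fun r => \sum_c M r c * b c) <=
  Num.sqrt (\sum_r \sum_c M r c ^+ 2) * l2 b.
Proof.
rewrite /l2 -sqrtrM; last by apply: sumr_ge0 => r _; apply: sumr_ge0 => c _; apply: sqr_ge0.
apply: ler_wsqrtr; rewrite mulr_suml; apply: ler_sum => r _; exact: (CS xpredT).
Qed.

Lemma opnorm2_has_sup (RT CT : finType) (M : RT -> CT -> R) :
  has_sup [set y : R | exists b : CT -> R,
          l2 b <= 1 /\ y = l2 (fun r : RT => \sum_(c : CT) M r c * b c)].
Proof.
split.
  exists 0, (fun _ => 0); split.
    by rewrite /l2 big1 ?sqrtr0 // => c _; rewrite expr0n.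
  by rewrite /l2 big1 ?sqrtr0 // => r _; rewrite big1 ?expr0n // => c _; rewrite mulr0.
exists (Num.sqrt (\sum_r \sum_c M r c ^+ 2)) => y [b [b1 ->]].
apply: le_trans (l2_frob M b) _.
by rewrite -[leRHS]mulr1 ler_wpM2l ?sqrtr_ge0.
Qed.

Lemma opnorm2_ge0 (RT CT : finType) (M : RT -> CT -> R) : 0 <= opnorm2 M.
Proof.
rewrite /opnorm2; apply: (sup_upper_bound (opnorm2_has_sup M)).
exists (fun _ => 0); split.
  by rewrite /l2 big1 ?sqrtr0 // => c _; rewrite expr0n.
by rewrite /l2 big1 ?sqrtr0 // => r _; rewrite big1 ?expr0n // => c _; rewrite mulr0.
Qed.

Lemma opnorm2_bound (RT CT : finType) (M : RT -> CT -> R) b :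
  l2 (fun r => \sum_c M r c * b c) <= opnorm2 M * l2 b.
Proof.
have hs := opnorm2_has_sup M.
have [b0|bp] := eqVneq (l2 b) 0.
  have bz : forall c, b c = 0.
    move: b0; rewrite /l2 => /eqP; rewrite sqrtr_eq0 => H.
    have H0 : \sum_c b c ^+ 2 = 0.
      by apply/eqP; rewrite eq_le H /=; apply: sumr_ge0 => c _; apply: sqr_ge0.
    move=> c; have Hc : b c ^+ 2 <= 0.
      rewrite -H0 (bigD1 c) //= lerDl; apply: sumr_ge0 => ? _; exact: sqr_ge0.
    have : b c ^+ 2 == 0 by rewrite eq_le Hc sqr_ge0.
    by rewrite sqrf_eq0 => /eqP.
  rewrite b0 mulr0 /l2 big1 ?sqrtr0 // => r _; rewrite big1 ?expr0n // => c _.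
  by rewrite bz mulr0.
have lp : 0 < l2 b by rewrite lt_def bp l2_ge0.
pose b' c := (l2 b)^-1 * b c.
have H : l2 (fun r => \sum_c M r c * b' c) <= opnorm2 M.
  rewrite /opnorm2; apply: (sup_upper_bound hs); exists b'; split => //.
  by rewrite /b' l2_scale ger0_norm ?invr_ge0 ?l2_ge0 // mulVf.
have E : (fun r => \sum_c M r c * b' c) =
         (fun r => (l2 b)^-1 * \sum_c M r c * b c).
  apply: funext => r; rewrite mulr_sumr; apply: eq_bigr => c _; rewrite /b'.
  by rewrite mulrCA.
move: H; rewrite E l2_scale ger0_norm ?invr_ge0 ?l2_ge0 // => H.
have := ler_wpM2l (l2_ge0 b) H.
by rewrite mulrA mulfV // mul1r mulrC.
Qed.

Lemma bnd_chart (S1 S2 : {set K}) (A1 A2 : finType) (h1 : A1 -> X -> X)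
  (h2 : A2 -> X -> X) (M : A1 -> A2 -> R) kap :
  chart S1 h1 -> chart S2 h2 -> [disjoint S1 & S2] ->
  (forall a b i, kap (h2 b (h1 a i)) = M a b) ->
  bnd kap S1 S2 (opnorm2 M).
Proof.
move=> c1 c2 d12 HM psi chi d1 d2 i.
rewrite sumS_fubini // (chart_sum _ _ c1).
under eq_bigr => a _ do rewrite (chart_sum _ _ c2).
have c2' := c2; case: c2' => c21 c22 _.
have E : forall a b, psi (h2 b (h1 a i)) * kap (h2 b (h1 a i)) * chi (h2 b (h1 a i))
   = psi (h1 a i) * (M a b * chi (h2 b i)).
  move=> a b; rewrite HM mulrA; congr (_ * _ * _).
    apply: d1; apply/agreeP => k kS; have /agreeP := c21 b (h1 a i); apply.
    by rewrite inE (disjointFr d12 kS).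
  by apply: d2; exact: c22.
rewrite (eq_bigr (fun a => psi (h1 a i) * \sum_b M a b * chi (h2 b i))); last first.
  by move=> a _; rewrite mulr_sumr; apply: eq_bigr => b _; exact: E.
have -> : nrm S1 psi i = l2 (fun a => psi (h1 a i)) by rewrite /nrm (chart_sum _ _ c1).
have -> : nrm S2 chi i = l2 (fun b => chi (h2 b i)) by rewrite /nrm (chart_sum _ _ c2).
apply: le_trans (CSabs xpredT _ _) _.
rewrite [opnorm2 M * _]mulrC -mulrA; apply: ler_wpM2l; first exact: l2_ge0.
exact: opnorm2_bound.
Qed.

Lemma bnd_frob (S2 : {set K}) kap i0 : dep S2 kap ->
  bnd kap finset.set0 S2 (nrm S2 kap i0).
Proof.
move=> dk psi chi d1 d2 i.
rewrite finset.set0U.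
have dpsi : dep finset.set0 psi by [].
have -> : sumS S2 (fun j => psi j * kap j * chi j) i =
          sumS S2 (fun j => psi j * (kap j * chi j)) i.
  by apply: eq_bigr => j _; rewrite mulrA.
rewrite (sumS_pull (fun j => kap j * chi j) i dpsi); last by apply/pred0P => k; rewrite !inE.
rewrite normrM.
have -> : nrm finset.set0 psi i = `|psi i| by rewrite /nrm sumS_set0 sqrtr_sqr.
have -> : nrm S2 kap i0 = nrm S2 kap i.
  rewrite /nrm; congr Num.sqrt.
  have dk2 : dep S2 (fun j => kap j ^+ 2) by move=> x y /dk ->.
  apply: (sumS_dep (S:=S2) dk2); apply/agreeP => k; by rewrite !inE andNb.
rewrite [nrm S2 kap i * _]mulrC -mulrA; apply: ler_wpM2l => //.
exact: CSabs.
Qed.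




Section Sweep.
Variables (J : finType) (In Out : J -> {set K}) (F : J -> X -> R) (c : J -> R)
  (r : J -> nat).
Hypotheses (HF : forall j, dep (In j :|: Out j) (F j))
  (Hb : forall j, bnd (F j) (In j) (Out j) (c j))
  (Hc : forall j, 0 <= c j)
  (Hprod : forall k, exists p, k \in Out p)
  (Hout : forall k p p', k \in Out p -> k \in Out p' -> p = p')
  (Hcons : forall k, exists q, k \in In q)
  (Hin : forall k q q', k \in In q -> k \in In q' -> q = q')
  (Hr : forall k p q, k \in Out p -> k \in In q -> (r p < r q)%N).

Definition Cons (A : {set J}) := \bigcup_(j in A) In j.
Definition Open (A : {set J}) := (\bigcup_(j in A) Out j) :\: Cons A.
Definition Phi (A : {set J}) := sumS (Cons A) (fun x => \prod_(j in A) F j x).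
Definition closedJ (A : {set J}) :=
  forall j k q, q \in A -> k \in In q -> k \in Out j -> j \in A.

Lemma Phi_dep A : dep (Open A) (Phi A).
Proof.
apply: (dep_sub _ (sumS_dep (S := Cons A) (dep_prod (A:=A) HF))).
apply/subsetP => k; rewrite /Open !inE => /andP [nC /bigcupP [j jA]].
rewrite inE => /orP [kI|kO].
  by case/negP: nC; apply/bigcupP; exists j.
by rewrite nC /=; apply/bigcupP; exists j.
Qed.

Lemma sweep_ind m : forall A : {set J}, #|A| = m -> closedJ A ->
  forall i, nrm (Open A) (Phi A) i <= \prod_(j in A) c j.
Proof.
elim: m => [|m IH] A cardA clA i.
  rewrite (cards0_eq cardA) /nrm /Phi /Open /Cons !big_set0.
  have -> : (finset.set0 :\: finset.set0 : {set K}) = finset.set0.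
    by apply/setP => k; rewrite !inE.
  by rewrite !sumS_set0 big_set0 expr1n sqrtr1.
have : (0 < #|A|)%N by rewrite cardA.
rewrite card_gt0 => /set0Pn [j0 j0A].
have [j jA jmax] := @arg_maxnP J j0 (fun x => x \in A) r j0A.
set A' := A :\ j.
have cardA' : #|A'| = m by move: cardA; rewrite (cardsD1 j) jA add1n => -[].
have noc : forall a b, geq a b -> (a < b)%N -> False.
  by move=> a b /= H1 H2; move: (leq_trans H2 H1); rewrite ltnn.
have jA' : j \notin A' by rewrite !inE eqxx.
have qA' : forall q, q \in A' -> q \in A by move=> q; rewrite !inE => /andP [].
have qj : forall q, q \in A' -> q != j by move=> q; rewrite !inE => /andP [].
have clA' : closedJ A'.
  move=> j' k q qA kI kO; rewrite !inE (clA j' k q (qA' _ qA) kI kO) andbT.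
  apply/eqP => ej; have := Hr kO kI; have := jmax q (qA' _ qA).
  by rewrite -ej; apply: noc.
have F1 : forall k, k \in Out j -> k \notin In j.
  by move=> k kO; apply/negP => kI; have := Hr kO kI; rewrite ltnn.
have F5 : forall k, k \in Out j -> k \notin Cons A'.
  move=> k kO; apply/negP => /bigcupP [q qA kI].
  have := Hr kO kI; have := jmax q (qA' _ qA); exact: noc.
have F4 : forall k, k \in In j -> k \notin Cons A'.
  move=> k kI; apply/negP => /bigcupP [q qA kI'].
  by have := Hin kI kI' => ej; move: qA; rewrite -ej (negbTE jA').
have F2 : In j \subset Open A'.
  apply/subsetP => k kI; rewrite /Open inE F4 //=.
  have [p kp] := Hprod k; apply/bigcupP; exists p => //.
  rewrite !inE (clA p k j jA kI kp) andbT; apply/eqP => ep.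
  by have := Hr kp kI; rewrite ep ltnn.
have F3 : [disjoint Out j & Open A'].
  apply/pred0P => k /=; apply/negbTE/negP => /andP [kO].
  rewrite /Open inE => /andP [_ /bigcupP [p pA kp]].
  by have := Hout kO kp => ep; move: pA; rewrite -ep (negbTE jA').
have EC : Cons A = In j :|: Cons A' by rewrite /Cons (big_setD1 j jA).
have EPhi : Phi A = sumS (In j) (fun z => Phi A' z * F j z).
  apply: funext => x; rewrite /Phi EC sumS_fubini; last first.
    by apply/pred0P => k /=; apply/negbTE/negP => /andP [kI kC]; move: (F4 k kI); rewrite kC.
  apply: eq_bigr => z _.
  have -> : sumS (Cons A') (fun y => \prod_(i0 in A) F i0 y) z =
    sumS (Cons A') (fun y => F j y * \prod_(i0 in A') F i0 y) z.
    by apply: eq_bigr => y _; rewrite (big_setD1 j jA).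
  rewrite (sumS_pull (fun y => \prod_(i0 in A') F i0 y) z (@HF j)); first by rewrite mulrC.
  apply/pred0P => k /=; apply/negbTE/negP => /andP [].
  rewrite inE => /orP [kI|kO] kC.
    by move: (F4 k kI); rewrite kC.
  by move: (F5 k kO); rewrite kC.
have EOpen : Open A = (Open A' :\: In j) :|: Out j.
  apply/setP => k; rewrite /Open EC (big_setD1 j jA) !inE -/A' -/(Cons A').
  case: (boolP (k \in Out j)) => kO.
    by rewrite (negbTE (F1 k kO)) (negbTE (F5 k kO)) /= orbT.
  by rewrite /= orbF; case: (k \in In j); rewrite ?andbF //= andbC.
rewrite EPhi EOpen.
apply: le_trans (step _ _ _ (@Phi_dep A') (@Hb j) (@Hc j) i) _.
- by apply/pred0P => k /=; apply/negbTE/negP => /andP [kI kO]; move: (F1 k kO); rewrite kI.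
- exact: F2.
- exact: F3.
rewrite (big_setD1 j jA) /=; apply: ler_wpM2l; first exact: Hc.
exact: IH.
Qed.

Lemma sweep (i : X) : `|\sum_x \prod_j F j x| <= \prod_j c j.
Proof.
have clT : closedJ [set: J] by move=> *; rewrite inE.
have := sweep_ind erefl clT i.
have ET : Cons [set: J] = [set: K].
  apply/setP => k; rewrite inE; have [q kq] := Hcons k.
  by apply/bigcupP; exists q; rewrite ?inE.
have E : Phi [set: J] i = \sum_x \prod_j F j x.
  rewrite /Phi ET sumS_setT; apply: eq_bigr => x _.
  by apply: eq_bigl => j; rewrite inE.
rewrite (eq_bigl xpredT (fun j => c j)); last by move=> j; rewrite inE.
move=> H; apply: le_trans H; rewrite -E; exact: nrm_ge.
Qed.

End Sweep.

End Gen.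

Lemma merge_in (n k : nat) (I : {set 'I_k}) (a : {ffun {j : 'I_k | j \in I} -> 'I_n}) (b : {ffun {j : 'I_k | j \notin I} -> 'I_n}) (j : 'I_k) (H : j \in I) :
  Defs.merge a b j = a (exist _ j H).
Proof.
rewrite /Defs.merge ffunE.
match goal with |- context[match ?x with _ => _ end] => destruct x as [H'|H'] end.
  by rewrite (bool_irrelevance H' H).
exfalso; exact: (negP H' H).
Qed.
Lemma merge_out (n k : nat) (I : {set 'I_k}) (a : {ffun {j : 'I_k | j \in I} -> 'I_n}) (b : {ffun {j : 'I_k | j \notin I} -> 'I_n}) (j : 'I_k) (H : j \notin I) :
  Defs.merge a b j = b (exist _ j H).
Proof.
rewrite /Defs.merge ffunE.
match goal with |- context[match ?x with _ => _ end] => destruct x as [H'|H'] end.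
  exfalso; exact: (negP H H').
by rewrite (bool_irrelevance H' H).
Qed.

Section Graph.
Variables (R : realType) (n : nat) (V E : finType) (g : multigraph V E)
  (fv : forall v : V, tensor R n (deg g v)) (fe : E -> 'M[R]_n) (s t : V)
  (dir : E -> bool).
Arguments fv : clear implicits.
Hypothesis wf : wf_multigraph g.
Hypothesis acyc : oacyclic g dir.
Hypothesis srcS : is_source g dir s.
Hypothesis sinkT : is_sink g dir t.
Hypothesis st : s != t.
Hypothesis srcU : forall v, is_source g dir v -> v = s.
Hypothesis sinkU : forall v, is_sink g dir v -> v = t.

Local Notation K := (E * bool)%type.
Local Notation X := {ffun K -> 'I_n}.
Local Notation oh := (Defs.ohead g dir).
Local Notation ot := (Defs.otail g dir).

Lemma noloop e : esrc g e != edst g e.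
Proof. by case: wf. Qed.

Lemma port_inj v : injective (port g v).
Proof. by case: wf. Qed.

Lemma incid v e : (exists k, port g v k = e) <-> (esrc g e = v \/ edst g e = v).
Proof. by case: wf. Qed.

Lemma ht_ne e : oh e != ot e.
Proof.
rewrite /Defs.ohead /Defs.otail; case: (dir e); first by rewrite eq_sym noloop.
exact: noloop.
Qed.

Lemma inc_ht v e : (esrc g e = v \/ edst g e = v) <-> (oh e = v \/ ot e = v).
Proof. by rewrite /Defs.ohead /Defs.otail; case: (dir e); tauto. Qed.

Lemma port_inc v k : oh (port g v k) = v \/ ot (port g v k) = v.
Proof. by apply/inc_ht/(incid v (port g v k)).1; exists k. Qed.

Lemma sideH e v : oh e = v -> (edst g e == v) = dir e.
Proof.
rewrite /Defs.ohead; case: (dir e) => <-; first by rewrite eqxx.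
by apply/negbTE; rewrite eq_sym noloop.
Qed.

Lemma sideT e v : ot e = v -> (edst g e == v) = ~~ dir e.
Proof.
rewrite /Defs.otail; case: (dir e) => <- /=; last by rewrite eqxx.
by apply/negbTE; rewrite eq_sym noloop.
Qed.

Definition pos (v : V) : nat := #|finset (fun u => connect (oarc g dir) u v)|.

Lemma pos_lt e : (pos (ot e) < pos (oh e))%N.
Proof.
have arc : oarc g dir (ot e) (oh e) by apply/existsP; exists e; rewrite !eqxx.
apply: proper_card; apply/properP; split.
  apply/subsetP => u; rewrite !inE => cu.
  by apply: connect_trans cu (connect1 arc).
exists (oh e); first by rewrite inE connect0.
by rewrite inE; apply: acyc.
Qed.


Definition pi v (k : 'I_(deg g v)) : K := (port g v k, edst g (port g v k) == v).
Arguments pi : clear implicits.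

Lemma pi_inj v : injective (pi v).
Proof. by move=> k k' [] /port_inj. Qed.

Definition Tv v : X -> R := fun i => fv v [ffun k => i (pi v k)].
Definition Me e : X -> R := fun i => fe e (i (e, false)) (i (e, true)).

Definition InJ (j : V + E) : {set K} :=
  match j with
  | inl v => [set k : K | (oh k.1 == v) && (k.2 == dir k.1)]
  | inr e => [set (e, ~~ dir e)]
  end.
Definition OutJ (j : V + E) : {set K} :=
  match j with
  | inl v => [set k : K | (ot k.1 == v) && (k.2 == ~~ dir k.1)]
  | inr e => [set (e, dir e)]
  end.
Definition FJ (j : V + E) : X -> R :=
  match j with inl v => Tv v | inr e => Me e end.
Definition cJ (j : V + E) : R :=
  match j with
  | inl v => if (v == s) || (v == t) then frob (fv v) else matopnorm (fv v)
  | inr e => mxopnorm (fe e)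
  end.
Definition rJ (j : V + E) : nat :=
  match j with inl v => 2 * pos v | inr e => (2 * pos (ot e)).+1 end.

Lemma pi_mem v k : pi v k \in InJ (inl v) :|: OutJ (inl v).
Proof.
rewrite !inE /=; case: (port_inc k) => H.
  by rewrite H (sideH H) !eqxx.
by rewrite H (sideT H) !eqxx orbT.
Qed.

Lemma HF j : dep (InJ j :|: OutJ j) (FJ j).
Proof.
case: j => [v|e] i i' /agreeP A /=.
  rewrite /Tv; congr (fv v); apply/ffunP => k; rewrite !ffunE; apply: A.
  exact: pi_mem.
rewrite /Me; congr (fe e _ _); apply: A; rewrite !inE; by case: (dir e); rewrite !eqxx ?orbT.
Qed.

Lemma Hprod k : exists p, k \in OutJ p.
Proof.
case: k => e b; case: (eqVneq b (dir e)) => [->|nb].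
  by exists (inr e); rewrite inE.
exists (inl (ot e)); rewrite inE /= eqxx /=.
by move: nb; case: b; case: (dir e).
Qed.

Lemma Hcons k : exists q, k \in InJ q.
Proof.
case: k => e b; case: (eqVneq b (~~ dir e)) => [->|nb].
  by exists (inr e); rewrite inE.
exists (inl (oh e)); rewrite inE /= eqxx /=.
by move: nb; case: b; case: (dir e).
Qed.

Lemma Hout k p p' : k \in OutJ p -> k \in OutJ p' -> p = p'.
Proof.
case: k => e b; case: p => [v|e1]; case: p' => [v'|e2]; rewrite !inE /=.
- by move=> /andP [/eqP <- _] /andP [/eqP <- _].
- move=> /andP [_ /eqP Hb] /eqP [E1 E2]; move: Hb; rewrite E2 E1.
  by case: (dir e2).
- move=> /eqP [E1 E2] /andP [_ /eqP Hb]; move: Hb; rewrite E2 E1.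
  by case: (dir e1).
- by move=> /eqP [-> _] /eqP [-> _].
Qed.

Lemma Hin k q q' : k \in InJ q -> k \in InJ q' -> q = q'.
Proof.
case: k => e b; case: q => [v|e1]; case: q' => [v'|e2]; rewrite !inE /=.
- by move=> /andP [/eqP <- _] /andP [/eqP <- _].
- move=> /andP [_ /eqP Hb] /eqP [E1 E2]; move: Hb; rewrite E2 E1.
  by case: (dir e2).
- move=> /eqP [E1 E2] /andP [_ /eqP Hb]; move: Hb; rewrite E2 E1.
  by case: (dir e1).
- by move=> /eqP [-> _] /eqP [-> _].
Qed.

Lemma Hr k p q : k \in OutJ p -> k \in InJ q -> (rJ p < rJ q)%N.
Proof.
case: k => e b; case: p => [v|e1]; case: q => [w|e2]; rewrite !inE /=.
- move=> /andP [_ /eqP H1] /andP [_ /eqP H2]; move: H2; rewrite H1.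
  by case: (dir e).
- move=> /andP [/eqP <- _] /eqP [E1 E2]; rewrite E1; lia.
- move=> /eqP [E1 E2] /andP [/eqP <- _]; rewrite E1.
  have := pos_lt e1; lia.
- move=> /eqP [E1 E2] /eqP [E3 E4]; move: E4; rewrite E2 -E3 E1.
  by case: (dir e1).
Qed.


Definition Iv v : {set 'I_(deg g v)} := [set k | oh (port g v k) == v].

Lemma In_chart v :
  chart (InJ (inl v)) (ext (n:=n) (fun j : {k : 'I_(deg g v) | k \in Iv v} => pi v (val j))).
Proof.
apply: chart_ext; first by move=> j j' /pi_inj /val_inj.
case=> e b; rewrite inE /=; apply/andP/existsP.
- case=> /eqP He /eqP ->.
  have [k pk] : exists k, port g v k = e by apply/(incid v e).2/inc_ht; left.
  have kI : k \in Iv v by rewrite inE pk He.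
  by exists (exist _ k kI); rewrite /= /pi pk (sideH He).
- case=> [[k kI] /=]; rewrite /pi => /eqP [<- <-]; move: kI; rewrite inE => /eqP H.
  by rewrite H (sideH H) !eqxx.
Qed.

Lemma Out_chart v :
  chart (OutJ (inl v)) (ext (n:=n) (fun j : {k : 'I_(deg g v) | k \notin Iv v} => pi v (val j))).
Proof.
apply: chart_ext; first by move=> j j' /pi_inj /val_inj.
case=> e b; rewrite inE /=; apply/andP/existsP.
- case=> /eqP He /eqP ->.
  have [k pk] : exists k, port g v k = e by apply/(incid v e).2/inc_ht; right.
  have kI : k \notin Iv v by rewrite inE pk -He ht_ne.
  by exists (exist _ k kI); rewrite /= /pi pk (sideT He).
- case=> [[k kI] /=]; rewrite /pi => /eqP [<- <-]; move: kI; rewrite inE => H.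
  case: (port_inc k) => H'; first by rewrite H' eqxx in H.
  by rewrite H' (sideT H') !eqxx.
Qed.

Lemma bnd_mid v : bnd (Tv v) (InJ (inl v)) (OutJ (inl v)) (matnorm (fv v) (Iv v)).
Proof.
rewrite /matnorm; apply: (bnd_chart (In_chart v) (Out_chart v)).
  apply/pred0P => [[e b]] /=; rewrite !inE /=; apply/negbTE/negP.
  by case/andP => /andP [/eqP H1 _] /andP [/eqP H2 _]; move: (ht_ne e); rewrite H1 H2 eqxx.
move=> a b i; rewrite /Tv; congr (fv v); apply/ffunP => k; rewrite [in LHS]ffunE.
case: (boolP (k \in Iv v)) => H.
  rewrite merge_in ext_out; last first.
    by move=> [j jn] /=; apply/eqP => /pi_inj Ek; move: jn; rewrite Ek H.
  have -> : pi v k = (fun j : {k : 'I_(deg g v) | k \in Iv v} => pi v (val j)) (exist _ k H) by [].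
  by rewrite ext_in //; move=> j j' /pi_inj /val_inj.
rewrite merge_out.
have -> : pi v k = (fun j : {k : 'I_(deg g v) | k \notin Iv v} => pi v (val j)) (exist _ k H) by [].
by rewrite ext_in //; move=> j j' /pi_inj /val_inj.
Qed.


Lemma full_chart v (S : {set K}) : (forall k, pi v k \in S) ->
  (forall kk, kk \in S -> exists k, pi v k = kk) -> chart S (ext (n:=n) (pi v)).
Proof.
move=> H1 H2; apply: chart_ext; first exact: pi_inj.
move=> kk; apply/idP/existsP => [/H2 [k <-]|[k /eqP <-]]; [by exists k | exact: H1].
Qed.

Lemma nrm_full v (S : {set K}) (i0 : X) : chart S (ext (n:=n) (pi v)) ->
  nrm S (Tv v) i0 = frob (fv v).
Proof.
move=> ch; rewrite /nrm (chart_sum _ _ ch) /frob /l2; congr Num.sqrt.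
apply: eq_bigr => a _; rewrite /Tv; congr (fv v _ ^+ 2); apply/ffunP => k.
by rewrite ffunE ext_in //; exact: pi_inj.
Qed.

Lemma In_s : InJ (inl s) = finset.set0.
Proof. by apply/setP => [[e b]]; rewrite !inE /= (negbTE (@srcS e)). Qed.

Lemma Out_t : OutJ (inl t) = finset.set0.
Proof. by apply/setP => [[e b]]; rewrite !inE /= (negbTE (@sinkT e)). Qed.

Lemma Out_s_chart : chart (OutJ (inl s)) (ext (n:=n) (pi s)).
Proof.
apply: full_chart.
  move=> k; case: (port_inc k) => H; first by move: (@srcS (port g s k)); rewrite H eqxx.
  by rewrite inE /= H (sideT H) !eqxx.
case=> e b; rewrite inE /= => /andP [/eqP He /eqP ->].
have [k pk] : exists k, port g s k = e by apply/(incid s e).2/inc_ht; right.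
by exists k; rewrite /pi pk (sideT He).
Qed.

Lemma In_t_chart : chart (InJ (inl t)) (ext (n:=n) (pi t)).
Proof.
apply: full_chart.
  move=> k; case: (port_inc k) => H; last by move: (@sinkT (port g t k)); rewrite H eqxx.
  by rewrite inE /= H (sideH H) !eqxx.
case=> e b; rewrite inE /= => /andP [/eqP He /eqP ->].
have [k pk] : exists k, port g t k = e by apply/(incid t e).2/inc_ht; left.
by exists k; rewrite /pi pk (sideH He).
Qed.

Variable i0 : X.

Lemma bnd_s : bnd (Tv s) (InJ (inl s)) (OutJ (inl s)) (frob (fv s)).
Proof.
rewrite -(nrm_full i0 Out_s_chart) In_s; apply: bnd_frob.
have := @HF (inl s); rewrite In_s finset.set0U; move=> H; exact: H.
Qed.

Lemma bnd_t : bnd (Tv t) (InJ (inl t)) (OutJ (inl t)) (frob (fv t)).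
Proof.
rewrite -(nrm_full i0 In_t_chart) Out_t; apply: bnd_sym; apply: bnd_frob.
have := @HF (inl t); rewrite Out_t finset.setU0; move=> H; exact: H.
Qed.

Lemma matop_ge (k : nat) (T : tensor R n k) (I : {set 'I_k}) :
  (0 < #|I|)%N && (#|I| < k)%N -> matnorm T I <= matopnorm T.
Proof.
move=> HI; rewrite /matopnorm.
have : I \in index_enum {set 'I_k} by rewrite mem_index_enum.
elim: (index_enum _) => [//|x r IH]; rewrite inE big_cons => /orP [/eqP <-|Ir].
  by rewrite HI le_max lexx.
case: ifP => _; last exact: IH.
by rewrite le_max IH ?orbT.
Qed.

Lemma matop_ge0 (k : nat) (T : tensor R n k) : 0 <= matopnorm T.
Proof. by rewrite /matopnorm; elim/big_rec: _ => // i y _ Hy; rewrite le_max Hy orbT. Qed.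

Lemma cJ_ge0 j : 0 <= cJ j.
Proof.
case: j => [v|e] /=; last exact: opnorm2_ge0.
by case: ifP => _; [exact: sqrtr_ge0 | exact: matop_ge0].
Qed.

Lemma card_mid v : v != s -> v != t -> (0 < #|Iv v|)%N && (#|Iv v| < deg g v)%N.
Proof.
move=> vs vt.
have [e He] : exists e, oh e = v.
  case: (boolP [exists e, oh e == v]) => [/existsP [e /eqP He]|/existsPn H]; first by exists e.
  by have := srcU (v:=v) H => ev; rewrite ev eqxx in vs.
have [e' He'] : exists e, ot e = v.
  case: (boolP [exists x, ot x == v]) => [/existsP [x /eqP Hx]|/existsPn H]; first by exists x.
  by have := sinkU (v:=v) H => ev; rewrite ev eqxx in vt.
have [k pk] : exists k, port g v k = e by apply/(incid v e).2/inc_ht; left.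
have [k' pk'] : exists k, port g v k = e' by apply/(incid v e').2/inc_ht; right.
apply/andP; split.
  by rewrite card_gt0; apply/set0Pn; exists k; rewrite inE pk He.
have nk : k' \notin Iv v by rewrite !inE pk' -He' ht_ne.
have Hp : Iv v \proper [set: 'I_(deg g v)].
  rewrite properT; apply/negP => /eqP HE; move: nk; by rewrite HE inE.
by have := proper_card Hp; rewrite cardsT card_ord.
Qed.

Lemma bnd_edge e : bnd (Me e) (InJ (inr e)) (OutJ (inr e)) (mxopnorm (fe e)).
Proof.
have base : bnd (Me e) [set (e, false)] [set (e, true)] (mxopnorm (fe e)).
  rewrite /mxopnorm.
  apply: (bnd_chart (chart_upd1 n (e, false)) (chart_upd1 n (e, true))).
    by apply/pred0P => x /=; rewrite !inE; apply/negbTE/negP => /andP [/eqP -> /eqP].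
  by move=> a b i; rewrite /Me !ffunE !xpair_eqE !eqxx.
by rewrite /=; case: (dir e) => /=; [exact: base | exact: bnd_sym base].
Qed.

Lemma Hb j : bnd (FJ j) (InJ j) (OutJ j) (cJ j).
Proof.
case: j => [v|e]; last exact: bnd_edge.
rewrite /cJ /FJ; case: (eqVneq v s) => [->|vs]; first exact: bnd_s.
case: (eqVneq v t) => [->|vt]; first by rewrite orbT; exact: bnd_t.
refine (bnd_mono _ (@bnd_mid v)) => /=.
exact: matop_ge (card_mid vs vt).
Qed.

End Graph.

Unset Implicit Arguments.
Set Strict Implicit.

Theorem lemma5p4 (R : realType) (n : nat) (V E : finType) (g : multigraph V E)
    (fv : forall v : V, tensor R n (deg g v)) (fe : E -> 'M[R]_n) (s t : V) :
  wf_multigraph g -> bipolar g s t ->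
  `|tn_val fv fe| <=
    frob (fv s) * frob (fv t)
    * (\prod_(v : V | (v != s) && (v != t)) matopnorm (fv v))
    * (\prod_(e : E) mxopnorm (fe e)).
Proof.
move=> wf [st [dir [acyc srcS srcU sinkT sinkU]]].
have Hc := cJ_ge0 fv fe s t.
have ERHS : \prod_(j : V + E) cJ fv fe s t j =
    frob (fv s) * frob (fv t)
    * (\prod_(v : V | (v != s) && (v != t)) matopnorm (fv v))
    * (\prod_(e : E) mxopnorm (fe e)).
  rewrite big_sumType /=; congr (_ * _).
  rewrite (bigD1 s) //= (bigD1 t) /=; last by rewrite eq_sym.
  rewrite eqxx /= eqxx orbT mulrA; congr (_ * _).
  by apply: eq_bigr => v /andP [vs vt]; rewrite (negbTE vs) (negbTE vt).
rewrite -ERHS.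
case: (pickP (fun _ : {ffun (E * bool) -> 'I_n} => true)) => [i0 _|X0]; last first.
  rewrite /tn_val big_pred0 ?normr0 //; apply: prodr_ge0 => j _; exact: Hc.
have := @sweep R (E * bool)%type n (V + E)%type (InJ g dir) (OutJ g dir)
  (FJ fv fe) (cJ fv fe s t) (rJ g dir)
  (@HF R n V E g fv fe dir wf)
  (@Hb R n V E g fv fe s t dir wf srcS sinkT srcU sinkU i0)
  Hc (Hprod g dir) (@Hout V E g dir) (Hcons g dir) (@Hin V E g dir)
  (@Hr V E g s t dir acyc st) i0.
congr (`|_| <= _); rewrite /tn_val; apply: eq_bigr => x _.
by rewrite big_sumType.
Qed.
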